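(* Let $M/K$ be a finite extension inside $\bar K$. Then $M/K$ is obtained by nontrivial strong cluster magnification from some subextension $L/K$ if and only if there is an isomorphism ${\rm Gal}(\tilde M/K)\cong A\times B$ with $A$ and $B$ nontrivial groups, under which ${\rm Gal}(\tilde M/M)$ corresponds to $A'\times 1$ for some subgroup $A'\subseteq A$ with $[A:A']>2$.
   Context: $K$ is a perfect field with a fixed algebraic closure $\bar K$; all extensions are finite and contained in $\bar K$. For a finite extension $L/K$, $\tilde L$ denotes its Galois closure in $\bar K$. Definition: $M/K$ is obtained by strong cluster magnification from a subextension $L/K$ (with $K\subseteq L\subseteq M$) if $[L:K]>2$, and there is a finite Galois extension $F/K$ with $\tilde L$ and $F$ linearly disjoint over $K$ and $LF=M$. The number $d=[F:K]$ is the magnification factor; the magnification is nontrivial if $F\neq K$. *)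

(* Defs.v *)
From HB Require Import structures.
From mathcomp Require Import all_boot all_order all_algebra all_fingroup all_solvable all_field.
Set Implicit Arguments. Unset Strict Implicit. Unset Printing Implicit Defensive.
Import GRing.Theory.
Local Open Scope ring_scope.

Section Defs.
Variables (F0 : fieldType) (E : splittingFieldType F0).

Definition perfect_subfield (K : {subfield E}) : Prop :=
  forall (p : nat) (x : E), p \in [pchar E] -> x \in K ->
    exists2 y, y \in K & y ^+ p = x.

Definition lin_indep_over (K : {vspace E}) (s : seq E) : Prop :=
  forall c : seq E, size c = size s -> all (fun a => a \in K) c ->
    \sum_(i < size s) c`_i * s`_i = 0 -> all (fun a => a == 0) c.

Definition lin_disjoint (K A B : {subfield E}) : Prop :=
  forall s : seq E, all (fun a => a \in A) s ->
    lin_indep_over K s -> lin_indep_over B s.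

Definition is_gal_closure (K M N : {subfield E}) : Prop :=
  [/\ (M <= N)%VS, galois K N &
      forall N' : {subfield E}, (M <= N')%VS -> galois K N' -> (N <= N')%VS].

Definition nontriv_strong_cluster_magnification (K L M : {subfield E}) : Prop :=
  [/\ (K <= L)%VS, (L <= M)%VS, (2 < \dim_K L)%N &
    exists (Lt F : {subfield E}),
      [/\ is_gal_closure K L Lt, galois K F, F != K,
          lin_disjoint K Lt F & (L * F)%VS = M]].

End Defs.

(* Main.v *)
Require Import Defs.
From HB Require Import structures.
From mathcomp Require Import all_boot all_order all_algebra all_fingroup all_solvable all_field.
Set Implicit Arguments. Unset Strict Implicit. Unset Printing Implicit Defensive.

Section FieldHelpers.
Import GRing.Theory.
Local Open Scope ring_scope.
Variables (F0 : fieldType) (E : splittingFieldType F0).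
Implicit Types K L M X Y Mt F Lt N : {subfield E}.

Lemma fixed_of_gal K X Mt : galois K Mt -> (K <= X)%VS -> (X <= Mt)%VS ->
  fixedField ('Gal(Mt / X))%g = X.
Proof. by move=> gK sKX sXM; apply/galois_fixedField; apply: galoisS gK; rewrite sKX sXM. Qed.

Lemma gal_inj K X Y Mt : galois K Mt -> (K <= X)%VS -> (X <= Mt)%VS ->
  (K <= Y)%VS -> (Y <= Mt)%VS -> ('Gal(Mt / X))%g = ('Gal(Mt / Y))%g -> X = Y :> {vspace E}.
Proof.
by move=> gK sKX sXM sKY sYM e; rewrite -(fixed_of_gal gK sKX sXM) e (fixed_of_gal gK sKY sYM).
Qed.

Lemma galMul X Y Mt : (X <= Mt)%VS -> (Y <= Mt)%VS ->
  ('Gal(Mt / (X * Y))%g) = (('Gal(Mt / X))%g :&: ('Gal(Mt / Y))%g)%g.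
Proof.
move=> sX sY; have sXY : (X * Y <= Mt)%VS by apply: prodv_sub.
apply/eqP; rewrite eqEsubset subsetI !galS ?field_subvMr ?field_subvMl //=.
rewrite galois_connection //; apply: prodv_sub.
  by rewrite -(galois_connection _ sX) subsetIl.
by rewrite -(galois_connection _ sY) subsetIr.
Qed.

Lemma gal_self Mt : ('Gal(Mt / Mt))%g = 1%g.
Proof.
apply/trivgP/subsetP=> x Hx; rewrite inE; apply/gal_eqP => a Ha.
by rewrite gal_id (fixed_gal (subvv Mt) Hx Ha).
Qed.

Lemma cap_of_disj K Lt F : (K <= Lt)%VS -> (K <= F)%VS -> lin_disjoint K Lt F ->
  (Lt :&: F)%VS = K.
Proof.
move=> sKL sKF dis; apply/eqP; rewrite eqEsubv subv_cap sKL sKF andbT.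
rewrite andbT; apply/subvP => x /memv_capP[xL xF]; case: (boolP (x \in K)) => // xK; exfalso.
have sum2 (c0 c1 : E) : \sum_(i < size [:: 1; x]) [:: c0; c1]`_i * [:: 1; x]`_i = c0 + c1 * x.
  by rewrite big_ord_recr big_ord_recr big_ord0 /= add0r mulr1.
have ind : lin_indep_over K [:: 1; x].
  move=> c; case: c => [|c0 [|c1 []]] // _ /and3P[c0K c1K _]; rewrite sum2 => e.
  case: (eqVneq c1 0) => [c10|c1n0].
    by move: e; rewrite c10 mul0r addr0 => ->; rewrite /= !eqxx.
  have : x = - c0 / c1.
    by apply: (mulIf c1n0); rewrite divfK // mulrC; apply/eqP; rewrite -addr_eq0 addrC e.
  by move=> ex; move: xK; rewrite ex rpredM ?rpredN ?memvV.
have := dis [:: 1; x]; rewrite /= xL mem1v => /(_ isT ind) /(_ [:: x; -1]).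
rewrite sum2 mulN1r subrr /= xF rpredN mem1v => /(_ erefl isT erefl).
by rewrite oppr_eq0 oner_eq0 andbF.
Qed.

Lemma disj_of_cap K Lt F : galois K fullv -> galois K F -> (K <= Lt)%VS ->
  (Lt :&: F)%VS = K -> lin_disjoint K Lt F.
Proof.
move=> gKf gKF sKL eC s sL indK.
have gLf : galois Lt fullv by apply: galoisS gKf; rewrite sKL subvf.
have [sKF _ nKF] := and3P gKF.
pose G := ('Gal(fullv / Lt))%g.
have xF x a : x \in G -> a \in F -> x a \in F.
  move=> gx aF.
  have ka : kAut K fullv x by rewrite -gal_kAut ?subvf // (subsetP (galS _ sKL)).
  have := normalField_kAut (K:=K) (M:=F) (E:=fullv) _ nKF ka.
  rewrite sKF subvf => /(_ isT) /andP[_ /eqP <-]; exact: memv_img.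
have xs x (i : 'I_(size s)) : x \in G -> x s`_i = s`_i.
  move=> gx; apply: (fixed_gal (subvf Lt) gx).
  exact: (all_nthP 0 sL).
have fixK a : a \in F -> (forall x, x \in G -> x a = a) -> a \in K.
  move=> aF h; rewrite -eC memv_cap aF andbT.
  have : a \in fixedField G by apply/fixedFieldP; [exact: memvf | exact: h].
  by move/galois_fixedField: gLf => ->.
set n := size s in xs indK *.
have main (m : nat) c : size c = n -> all (fun a => a \in F) c ->
    \sum_(i < n) c`_i * s`_i = 0 ->
    leq #|[set i : 'I_n | c`_i != 0]| m -> all (fun a => a == 0) c.
  elim: m c => [|m IH] c sz cF rel cnt; apply/(all_nthP 0) => j ltj /=.
  1,2: case cj0: (c`_j == 0) => //; move/negbT: cj0 => cj; exfalso.
  1,2: have ltjn : (j < n)%N by rewrite -sz.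
  { have : leq 1 #|[set i : 'I_n | c`_i != 0]|.
      by rewrite card_gt0; apply/set0Pn; exists (Ordinal ltjn); rewrite inE.
    by rewrite lt0n -leqn0 cnt. }
  pose jo := Ordinal ltjn.
  pose d := map (fun a => a / c`_j) c.
  have szd : size d = n by rewrite size_map.
  have cjF : c`_j \in F by apply: (all_nthP 0 cF).
  have dF : all (fun a => a \in F) d.
    rewrite all_map; apply/allP => a aC /=.
    by rewrite rpredM ?memvV // (allP cF).
  have dn (i : 'I_n) : d`_i = c`_i / c`_j by rewrite (nth_map 0) // sz.
  have reld : \sum_(i < n) d`_i * s`_i = 0.
    under eq_bigr => i _ do rewrite dn mulrAC.
    by rewrite -mulr_suml rel mul0r.
  have dj : d`_jo = 1 by rewrite dn divff.
  have dfix (i : 'I_n) x : x \in G -> x d`_i = d`_i.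
    move=> gx; pose e := map (fun a => a - x a) d.
    have eall : all (fun a => a == 0) e.
      apply: IH.
      - by rewrite size_map szd.
      - rewrite all_map; apply/allP => a aD /=.
        by rewrite rpredB ?xF // (allP dF).
      - under eq_bigr => k _ do rewrite (nth_map 0) ?szd // mulrBl.
        rewrite sumrB reld sub0r.
        rewrite (eq_bigr (fun k : 'I_n => x (d`_k * s`_k))); last first.
          by move=> k _; rewrite (rmorphM (gal_repr x)); congr (_ * _); symmetry; exact: (xs x k gx).
        by rewrite -rmorph_sum reld rmorph0 oppr0.
      - have sub : [set k : 'I_n | e`_k != 0] \subset [set k : 'I_n | c`_k != 0] :\ jo.
          apply/subsetP => k; rewrite !inE (nth_map 0) ?szd //.
          case: (eqVneq k jo) => [->|nkj]; first by rewrite dj rmorph1 subrr eqxx.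
          rewrite dn /=; case: (eqVneq c`_k 0) => [->|//].
          by rewrite mul0r rmorph0 subrr eqxx.
        apply: leq_trans (subset_leq_card sub) _.
        by move: cnt; rewrite (cardsD1 jo) inE cj add1n ltnS.
    move/(all_nthP 0): eall => /(_ i); rewrite size_map szd => /(_ (ltn_ord i)).
    by rewrite (nth_map 0) ?szd // subr_eq0 => /eqP <-.
  have dK : all (fun a => a \in K) d.
    apply/(all_nthP 0) => i; rewrite szd => lt.
    apply: fixK; first by apply: (all_nthP 0 dF); rewrite szd.
    by move=> x gx; apply: (dfix (Ordinal lt)).
  have := indK d szd dK reld => /(all_nthP 0) /(_ j).
  by rewrite szd ltjn -/(nat_of_ord jo) dj oner_eq0 => /(_ isT).
move=> c sz cF rel; exact: (main _ c sz cF rel (leqnn _)).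
Qed.

Lemma galois_cap K N Mt : galois K N -> galois K Mt -> galois K (N :&: Mt)%AS.
Proof.
case/and3P=> sKN _ nN /and3P[sKM sepM nM].
rewrite /galois /= subv_cap sKN sKM (separableSr (capvSr _ _) sepM) /=.
apply/forall_inP => f fK.
have eN := eqP (forall_inP nN f fK); have eM := eqP (forall_inP nM f fK).
rewrite eqEdim limg_dim_eq ?(eqP (AEnd_lker0 _)) ?capv0 // leqnn andbT.
apply/subvP => _ /memv_imgP[a /memv_capP[aN aM] ->].
rewrite memv_cap; apply/andP; split.
  by rewrite -eN; apply: memv_img.
by rewrite -eM; apply: memv_img.
Qed.

Lemma core_closure K L Mt : galois K Mt -> (K <= L)%VS -> (L <= Mt)%VS ->
  is_gal_closure K L (fixedField (gcore ('Gal(Mt / L))%g ('Gal(Mt / K))%g)).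
Proof.
move=> gK sKL sLM.
have sKM := subv_trans sKL sLM.
have sPG : ('Gal(Mt / L) \subset 'Gal(Mt / K))%g by apply: galS.
have nC := gcore_normal sPG.
split.
- rewrite -{1}(fixed_of_gal gK sKL sLM); apply: fixedFieldS; exact: gcore_sub.
- exact: (normal_fixedField_galois gK (gcore_normal sPG) : galois K (fixedField (gcore_group _ _))).
move=> N sLN gN.
have gN2 := galois_cap gN gK.
have sKN2 : (K <= N :&: Mt)%VS by case/and3P: gN2.
have sN2M : (N :&: Mt <= Mt)%VS by apply: capvSr.
have nN2 : ('Gal(Mt / (N :&: Mt)%AS) <| 'Gal(Mt / K))%g.
  apply: normalField_normal; first by rewrite sKN2 sN2M.
  by case/and3P: gN2.
have sub : ('Gal(Mt / (N :&: Mt)%AS) \subset gcore 'Gal(Mt / L) 'Gal(Mt / K))%g.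
  apply: gcore_max; last exact: normal_norm.
  by apply: galS; rewrite subv_cap sLN sLM.
apply: subv_trans (fixedFieldS sub) _.
rewrite (fixed_of_gal gK sKN2 sN2M); exact: capvSl.
Qed.

End FieldHelpers.
Section FwdGroup.
Local Open Scope group_scope.
Variables (gT : finGroupType) (G N1 N2 H P : {group gT}).
Hypotheses (nN1 : N1 <| G) (nN2 : N2 <| G) (tI : N1 :&: N2 = 1) (eM : N1 * N2 = G)
  (eH : H :=: P :&: N2) (sN1P : N1 \subset P) (sPG : P \subset G) (idx : (2 < #|G : P|)%N)
  (neN2 : N2 :!=: G).

Definition pairc (x : gT) : (coset_of N1 * coset_of N2)%type := (coset N1 x, coset N2 x).

Lemma pairc_morph : {in G &, {morph pairc : x y / x * y}}.
Proof.
move=> x y Gx Gy.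
have Nx1 : x \in 'N(N1) by apply: (subsetP (normal_norm nN1)).
have Ny1 : y \in 'N(N1) by apply: (subsetP (normal_norm nN1)).
have Nx2 : x \in 'N(N2) by apply: (subsetP (normal_norm nN2)).
have Ny2 : y \in 'N(N2) by apply: (subsetP (normal_norm nN2)).
by rewrite /pairc (morphM (coset_morphism N1)) // (morphM (coset_morphism N2)).
Qed.

Definition paircm := Morphism pairc_morph.

Lemma nG1 : G \subset 'N(N1). Proof. exact: normal_norm. Qed.
Lemma nG2 : G \subset 'N(N2). Proof. exact: normal_norm. Qed.

Lemma paircm_inj : 'injm paircm.
Proof.
apply/subsetP=> x kx; have Gx := dom_ker kx; have := mker kx.
rewrite /= /pairc => -[e1 e2].
have x1 : x \in N1 by apply: coset_idr => //; apply: (subsetP nG1).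
have x2 : x \in N2 by apply: coset_idr => //; apply: (subsetP nG2).
by rewrite -tI inE x1 x2.
Qed.

Lemma cardG : #|G| = (#|N1| * #|N2|)%N.
Proof. by rewrite -eM TI_cardMg. Qed.

Lemma paircm_im : paircm @* G = setX (G / N1) (G / N2).
Proof.
apply/eqP; rewrite eqEcard; apply/andP; split.
  apply/subsetP=> _ /morphimP[x _ Gx ->].
  by rewrite /= /pairc in_setX !mem_quotient.
rewrite cardsX (card_injm paircm_inj) // !card_quotient ?nG1 ?nG2 //.
rewrite -!divgS ?normal_sub // cardG.
rewrite mulKn ?cardG_gt0 // mulnK ?cardG_gt0 //.
by rewrite mulnC.
Qed.

Lemma eP : P = H * N1 :> {set gT}.
Proof.
have c21 : N2 * N1 = N1 * N2.
  by apply: normC; apply: subset_trans (normal_sub nN2) (normal_norm nN1).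
by rewrite eH group_modr // c21 eM (setIidPl sPG).
Qed.

Lemma fwd_main :
  exists (aT bT : finGroupType) (A A' : {group aT}) (B : {group bT})
          (f : {morphism G >-> (aT * bT)%type}),
     [/\ isom G (setX A B) f,
         A :!=: 1%g /\ B :!=: 1%g,
         (f @* H)%g = setX A' [1 bT]%g,
         A' \subset A & (2 < #|A : A'|%g)%N ].
Proof.
have sN1G := normal_sub nN1; have sN2G := normal_sub nN2.
have sHP : H \subset P by rewrite eH subsetIl.
have sHN2 : H \subset N2 by rewrite eH subsetIr.
have sHG := subset_trans sHP sPG.
exists (coset_of N1), (coset_of N2), (G / N1)%G, (P / N1)%G, (G / N2)%G, paircm.
split.
- by apply/isomP; split; [exact: paircm_inj | exact: paircm_im].
- split.
    apply/eqP => e; have : G \subset N1 by rewrite -quotient_sub1 ?nG1 //= e.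
    move=> sGN1; have eGP : P :=: G.
      by apply/eqP; rewrite eqEsubset sPG (subset_trans sGN1 sN1P).
    by move: idx; rewrite eGP indexgg.
  apply/eqP => e; have : G \subset N2 by rewrite -quotient_sub1 ?nG2 //= e.
  move=> sGN2; move/negP: neN2; apply; by rewrite eqEsubset sN2G sGN2.
- apply/eqP; rewrite eqEsubset; apply/andP; split.
    apply/subsetP=> _ /morphimP[x _ Hx ->].
    rewrite /= /pairc in_setX mem_quotient ?(subsetP sHP) //=.
    by rewrite coset_id ?(subsetP sHN2) // set11.
  apply/subsetP=> -[a b]; rewrite in_setX => /andP[aP /set1P ->].
  move: aP; rewrite /= eP quotientMidr => /morphimP[x Nx Hx ->].
  have -> : (coset N1 x, 1 : coset_of N2) = paircm x.
    change (paircm x) with (pairc x); rewrite /pairc (coset_id (subsetP sHN2 x Hx)). reflexivity.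
  by apply: mem_morphim => //; apply: (subsetP sHG).
- exact: quotientS.
- rewrite index_quotient_eq ?nG1 //.
  by apply: subset_trans (subsetIr _ _) sN1P.
Qed.

End FwdGroup.

Section Fwd.
Variables (F0 : fieldType) (E : splittingFieldType F0).
Local Open Scope ring_scope.

Lemma fwd_dir (K M Mt L : {subfield E}) :
  galois K fullv -> (K <= M)%VS -> is_gal_closure K M Mt ->
  nontriv_strong_cluster_magnification K L M ->
  (exists (aT bT : finGroupType) (A A' : {group aT}) (B : {group bT})
          (f : {morphism ('Gal(Mt / K))%g >-> (aT * bT)%type}),
     [/\ isom ('Gal(Mt / K))%g (setX A B) f,
         A :!=: 1%g /\ B :!=: 1%g,
         (f @* 'Gal(Mt / M))%g = setX A' [1 bT]%g,
         A' \subset A & (2 < #|A : A'|%g)%N ]).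
Proof.
move=> gKf sKM [sMMt gKMt minMt] [sKL sLM dimL [Lt [F [[sLLt gKLt minLt] gKF neFK dis eLF]]]].
have [sKF _ _] := and3P gKF.
have [_ _ nKLt] := and3P gKLt.
have [_ _ nKF] := and3P gKF.
have sKLt := subv_trans sKL sLLt.
have sLMt := subv_trans sLM sMMt.
have sLtMt : (Lt <= Mt)%VS by apply: minLt.
have sFM : (F <= M)%VS by rewrite -eLF field_subvMl.
have sFMt := subv_trans sFM sMMt.
have eC := cap_of_disj sKLt sKF dis.
have nN1 : ('Gal(Mt / Lt) <| 'Gal(Mt / K))%g.
  by apply: normalField_normal => //; rewrite sKLt sLtMt.
have nN2 : ('Gal(Mt / F) <| 'Gal(Mt / K))%g.
  by apply: normalField_normal => //; rewrite sKF sFMt.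
have tI : ('Gal(Mt / Lt) :&: 'Gal(Mt / F))%g = 1%g.
  pose I := ('Gal(Mt / Lt) :&: 'Gal(Mt / F))%G.
  have gX : galois K (fixedField I) by apply: (normal_fixedField_galois (G := I) gKMt); exact: normalI.
  have sMX : (M <= fixedField I)%VS.
    rewrite -eLF; apply: prodv_sub.
      apply: subv_trans sLLt _; rewrite -{1}(fixed_of_gal gKMt sKLt sLtMt).
      by apply: fixedFieldS; apply: subsetIl.
    rewrite -{1}(fixed_of_gal gKMt sKF sFMt).
    by apply: fixedFieldS; apply: subsetIr.
  have sMtX : (Mt <= fixedField I)%VS by apply: minMt.
  have eX : fixedField I = Mt.
    by apply/eqP; rewrite eqEsubv sMtX fixedField_bound.
  have := gal_fixedField I; rewrite /= => <-.
  rewrite eX; exact: gal_self.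
have eM : ('Gal(Mt / Lt) * 'Gal(Mt / F))%g = 'Gal(Mt / K)%g.
  pose J := ('Gal(Mt / Lt) <*> 'Gal(Mt / F))%G.
  have sJG : (J \subset 'Gal(Mt / K))%g by rewrite join_subG !normal_sub.
  have sFJK : (fixedField J <= K)%VS.
    rewrite -eC subv_cap; apply/andP; split.
      rewrite -(fixed_of_gal gKMt sKLt sLtMt); apply: fixedFieldS; exact: joing_subl.
    rewrite -(fixed_of_gal gKMt sKF sFMt); apply: fixedFieldS; exact: joing_subr.
  have sGJ : ('Gal(Mt / K) \subset J)%g.
    by rewrite -(gal_fixedField J); apply: galS.
  rewrite -norm_joinEr; last by apply: subset_trans (normal_sub nN2) (normal_norm nN1).
  by apply/eqP; rewrite eqEsubset sJG sGJ.
have eH : 'Gal(Mt / M)%g = ('Gal(Mt / L) :&: 'Gal(Mt / F))%g.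
  by rewrite -eLF galMul.
have idx : (2 < #|'Gal(Mt / K) : 'Gal(Mt / L)|%g)%N.
  by rewrite -(dim_fixed_galois gKMt (galS _ sKL)) (fixed_of_gal gKMt sKL sLMt).
have neN2 : ('Gal(Mt / F) :!=: 'Gal(Mt / K))%g.
  apply/eqP => e; move/negP: neFK; apply; apply/eqP; apply: val_inj.
  exact: (gal_inj gKMt sKF sFMt (subvv K) (subv_trans sKM sMMt) e).
have := fwd_main nN1 nN2 tI eM eH (galS _ sLLt) (galS _ sKL) idx neN2.
by [].
Qed.

End Fwd.

Section Bwd.
Variables (F0 : fieldType) (E : splittingFieldType F0).
Local Open Scope ring_scope.
Local Open Scope group_scope.

Lemma bwd_dir (K M Mt : {subfield E}) :
  galois K fullv -> (K <= M)%VS -> is_gal_closure K M Mt ->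
  (exists (aT bT : finGroupType) (A A' : {group aT}) (B : {group bT})
          (f : {morphism ('Gal(Mt / K))%g >-> (aT * bT)%type}),
     [/\ isom ('Gal(Mt / K))%g (setX A B) f,
         A :!=: 1%g /\ B :!=: 1%g,
         (f @* 'Gal(Mt / M))%g = setX A' [1 bT]%g,
         A' \subset A & (2 < #|A : A'|%g)%N ]) ->
  exists L : {subfield E}, nontriv_strong_cluster_magnification K L M.
Proof.
move=> gKf sKM [sMMt gKMt minMt] [aT [bT [A [A' [B [f [isof [nA nB] fH sA'A idx]]]]]]].
have [injf imf] := isomP isof.
have sKMt := subv_trans sKM sMMt.
pose G := ('Gal(Mt / K))%G.
pose P1 := (f @*^-1 (setX A' B))%G.
pose P2 := (f @*^-1 (setX A 1))%G.
pose N := (f @*^-1 (setX 1 B))%G.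
have sP1G : (P1 \subset G)%g by apply: morphpre_sub.
have sP2G : (P2 \subset G)%g by apply: morphpre_sub.
have sHG : ('Gal(Mt / M) \subset G)%g by apply: galS.
have eG : f @*^-1 (setX A B) = G.
  by rewrite -imf injmK.
have [nA1 n1B] := dprod_normal2 (setX_dprod A B).
have sAB1 : (setX A 1 \subset f @* G)%g by rewrite imf normal_sub.
have s1AB : (setX 1 B \subset f @* G)%g by rewrite imf normal_sub.
have sABi : (setX A B \subset f @* G)%g by rewrite imf.
have nP2 : (P2 <| G)%g.
  have h := morphpre_normal (f := f) sAB1 sABi.
  by move: nA1; rewrite -h eG.
have nN : (N <| G)%g.
  have h := morphpre_normal (f := f) s1AB sABi.
  by move: n1B; rewrite -h eG.
have eH : ('Gal(Mt / M) = P1 :&: P2)%g.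
  rewrite /= -morphpreI.
  have -> : (setX A' B :&: setX A 1 = setX A' 1)%g.
    apply/setP => -[a b]; rewrite !inE /=.
    case: (boolP (a \in A')) => aA' //=; case: (boolP (b == 1)) => b1 //=;
      rewrite ?andbF ?andbT //.
      by rewrite (subsetP sA'A) // (eqP b1) group1.
  by rewrite -fH injmK.
pose L : {subfield E} := fixedField P1.
pose F : {subfield E} := fixedField P2.
have sKL : (K <= L)%VS by rewrite -galois_connection.
have sKF : (K <= F)%VS by rewrite -galois_connection.
have sLMt : (L <= Mt)%VS by apply: fixedField_bound.
have sFMt : (F <= Mt)%VS by apply: fixedField_bound.
have eP1 : ('Gal(Mt / L) = P1)%g by apply: gal_fixedField.
have eP2 : ('Gal(Mt / F) = P2)%g by apply: gal_fixedField.
exists L; split => //.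
- rewrite -(fixed_of_gal gKMt sKM sMMt); apply: fixedFieldS; rewrite eH; exact: subsetIl.
- rewrite (dim_fixed_galois gKMt sP1G) -(index_injm P1 injf (subxx G)) imf.
  rewrite morphpreK; last by rewrite imf setXS.
  have := Lagrange (setXS sA'A (subxx B)); move/eqP.
  rewrite !cardsX -(Lagrange sA'A) mulnAC eqn_pmul2r ?cardG_gt0 //.
  by rewrite eqn_pmul2l ?cardG_gt0 // => /eqP ->.
have clo := core_closure gKMt sKL sLMt.
have sKLt : (K <= fixedField (gcore 'Gal(Mt / L) 'Gal(Mt / K)))%VS.
  case: clo => sLLt _ _; exact: subv_trans sKL sLLt.
exists (fixedField (gcore 'Gal(Mt / L) 'Gal(Mt / K)))%g, F; split => //.
- exact: (normal_fixedField_galois gKMt nP2).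
- apply/eqP => eFK.
  have eGF : 'Gal(Mt / F) = 'Gal(Mt / K) by rewrite eFK.
  have eP2G : P2 :=: G by rewrite -eP2 eGF.
  have : #|setX A B| = #|setX A [1 bT]|%g.
    rewrite -imf -(morphpreK sAB1) !(card_injm injf) //=.
    by rewrite eP2G.
  rewrite !cardsX cards1 muln1 => /eqP; rewrite -{2}(muln1 #|A|) eqn_pmul2l ?cardG_gt0 //.
  by rewrite -trivg_card1 (negPf nB).
- apply: disj_of_cap => //; first exact: (normal_fixedField_galois gKMt nP2).
  set Lt := fixedField _.
  apply/eqP; rewrite eqEsubv subv_cap sKLt sKF andbT andbT.
  set W := (Lt :&: F)%VS.
  have sWMt : (W <= Mt)%VS by apply: subv_trans (capvSr _ _) sFMt.
  have sCW : (gcore 'Gal(Mt / L) 'Gal(Mt / K) \subset 'Gal(Mt / W))%g.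
    by rewrite (galois_connection _ sWMt) capvSl.
  have sP2W : (P2 \subset 'Gal(Mt / W))%g.
    by rewrite (galois_connection _ sWMt) capvSr.
  have sGW : (G \subset 'Gal(Mt / W))%g.
    apply/subsetP => x Gx.
    have : f x \in setX A B by rewrite -imf mem_morphim.
    case fx: (f x) => [a b]; rewrite in_setX => /andP[aA bB].
    have /morphimP[u _ Gu fu] : ((1, b) \in f @* G)%g by rewrite imf in_setX group1 bB.
    have /morphimP[v _ Gv fv] : ((a, 1) \in f @* G)%g by rewrite imf in_setX aA group1.
    have exv : x = (v * u)%g.
      apply: (injmP injf) => //; first by rewrite groupM.
      by rewrite morphM // -fu -fv fx -[RHS]/(a * 1, 1 * b)%g mulg1 mul1g.
    rewrite exv groupM //.
      apply: (subsetP sP2W); rewrite mem_morphpre // -fv in_setX aA /=; exact: set11.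
    apply: (subsetP sCW); apply: (subsetP (gcore_max _ (normal_norm nN))).
      rewrite eP1; apply: morphpreS; apply: setXS => //; exact: sub1G.
    by rewrite mem_morphpre // -fu in_setX set11.
  apply: subv_trans (galois_connection_subv sWMt) _.
  apply: subv_trans (fixedFieldS sGW) _.
  by move/galois_fixedField: gKMt => ->.
- have sLF : (L * F <= Mt)%VS by apply: prodv_sub.
  have := gal_inj gKMt (subv_trans sKL (field_subvMr L F)) sLF sKM sMMt.
  rewrite /= galMul // eP1 eP2 -eH; exact.
Qed.

End Bwd.

Unset Implicit Arguments.
Set Strict Implicit.

Theorem theorem4p6 (F0 : fieldType) (E : splittingFieldType F0)
    (K M Mt : {subfield E}) :
  perfect_subfield K -> galois K fullv -> (K <= M)%VS ->
  is_gal_closure K M Mt ->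
  (exists L : {subfield E}, nontriv_strong_cluster_magnification K L M) <->
  (exists (aT bT : finGroupType) (A A' : {group aT}) (B : {group bT})
          (f : {morphism ('Gal(Mt / K))%g >-> (aT * bT)%type}),
     [/\ isom ('Gal(Mt / K))%g (setX A B) f,
         A :!=: 1%g /\ B :!=: 1%g,
         (f @* 'Gal(Mt / M))%g = setX A' [1 bT]%g,
         A' \subset A & (2 < #|A : A'|%g)%N ]).
Proof.
move=> _ gKf sKM clo; split.
  by case=> L h; exact: (fwd_dir gKf sKM clo h).
exact: (bwd_dir gKf sKM clo).
Qed.
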